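(* Let $A,B\in\mathfrak{J}_n$ be nonempty with $B\subset A$, let $x^*\in\mathbb{R}$, and suppose $\mu(\Omega_{A,B,x^*})=0$. Then the function $h(x)=\mu\big(xA\,\widetilde\oplus\,(1-x)B\big)$, $x\in\mathbb{R}$, is continuous at $x^*$.
   Context: $\mu$ is $n$-dimensional Lebesgue measure. $\operatorname{ci}(A)$ is the closure of the interior of $A$. $\mathfrak{J}_n$ is the family of bounded sets $A\subset\mathbb{R}^n$ with $A=\operatorname{ci}(A)$ and $\mu(\partial A)=0$. For nonempty bounded $A$, $d_S(p,A)=d(p,\partial A)$ if $p\in A$ and $d_S(p,A)=-d(p,\partial A)$ if $p\notin A$, with $d(q,E)=\min_{e\in E}\|q-e\|$. For nonempty $A,B\in\mathfrak{J}_n$, $x\in\mathbb{R}$: $f_{A,B,x}(p)=x\,d_S(p,A)+(1-x)\,d_S(p,B)$, the distance average is $xA\,\widetilde\oplus\,(1-x)B=\{p: f_{A,B,x}(p)\ge0\}$, and $\Omega_{A,B,x}=\{p: f_{A,B,x}(p)=0\}$. *)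

(* Defs.v *)
(* Lebesgue measure is defined
   as Lebesgue outer measure (infimum of total volumes of countable covers
   by closed boxes); all sets to which it is applied in the statement are
   closed, hence Borel, so this agrees with Lebesgue measure. *)
From Stdlib Require Import Reals Lra Classical ClassicalEpsilon.
From Stdlib Require Vectors.Fin.
Open Scope R_scope.

Definition vec (n : nat) : Type := Fin.t n -> R.

Fixpoint fsum (n : nat) : (Fin.t n -> R) -> R :=
  match n with
  | O => fun _ => 0
  | S m => fun f => f Fin.F1 + fsum m (fun i => f (Fin.FS i))
  end.

Fixpoint fprod (n : nat) : (Fin.t n -> R) -> R :=
  match n with
  | O => fun _ => 1
  | S m => fun f => f Fin.F1 * fprod m (fun i => f (Fin.FS i))
  end.

Definition vnorm {n : nat} (p : vec n) : R := sqrt (fsum n (fun i => (p i) ^ 2)).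
Definition vdist {n : nat} (p q : vec n) : R := vnorm (fun i => p i - q i).

Definition set (n : nat) : Type := vec n -> Prop.

Definition interior {n : nat} (A : set n) : set n :=
  fun p => exists r, 0 < r /\ forall q, vdist p q < r -> A q.
Definition closure {n : nat} (A : set n) : set n :=
  fun p => forall r, 0 < r -> exists q, A q /\ vdist p q < r.
Definition boundary {n : nat} (A : set n) : set n :=
  fun p => closure A p /\ ~ interior A p.
Definition ci {n : nat} (A : set n) : set n := closure (interior A).

Definition bounded {n : nat} (A : set n) : Prop :=
  exists M, forall p, A p -> vnorm p <= M.
Definition nonempty {n : nat} (A : set n) : Prop := exists p, A p.

(* d(q,E) = min_{e in E} ||q - e|| (the minimum, chosen by epsilon;
   it exists whenever E is nonempty and closed, e.g. E = boundary A). *)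
Definition is_min_dist {n : nat} (q : vec n) (E : set n) (d : R) : Prop :=
  (exists e, E e /\ vdist q e = d) /\ (forall e, E e -> d <= vdist q e).
Definition dist_set {n : nat} (q : vec n) (E : set n) : R :=
  epsilon (inhabits 0) (fun d => is_min_dist q E d).

Definition dS {n : nat} (p : vec n) (A : set n) : R :=
  epsilon (inhabits 0)
    (fun d => (A p -> d = dist_set p (boundary A)) /\
              (~ A p -> d = - dist_set p (boundary A))).

Definition in_box {n : nat} (a b : vec n) : set n :=
  fun p => forall i, a i <= p i <= b i.
Definition box_vol {n : nat} (a b : vec n) : R :=
  fprod n (fun i => Rmax 0 (b i - a i)).

Definition cover_sum {n : nat} (E : set n) (s : R) : Prop :=
  exists (a b : nat -> vec n),
    (forall p, E p -> exists k, in_box (a k) (b k) p) /\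
    infinite_sum (fun k => box_vol (a k) (b k)) s.

Definition is_glb (S : R -> Prop) (m : R) : Prop :=
  (forall s, S s -> m <= s) /\ (forall m', (forall s, S s -> m' <= s) -> m' <= m).

Definition mu {n : nat} (E : set n) : R :=
  epsilon (inhabits 0) (fun m => is_glb (cover_sum E) m).

Definition in_Jn {n : nat} (A : set n) : Prop :=
  bounded A /\ (forall p, A p <-> ci A p) /\ mu (boundary A) = 0.

Definition f_ABx {n : nat} (A B : set n) (x : R) (p : vec n) : R :=
  x * dS p A + (1 - x) * dS p B.

Definition dist_avg {n : nat} (A B : set n) (x : R) : set n :=
  fun p => 0 <= f_ABx A B x p.

Definition Omega {n : nat} (A B : set n) (x : R) : set n :=
  fun p => f_ABx A B x p = 0.

(* Main.v *)
Require Import Defs.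
From Stdlib Require Import Reals.
Open Scope R_scope.
From Stdlib Require Import Lra Lia ZArith Classical ClassicalEpsilon FunctionalExtensionality.
From Stdlib Require Vectors.Fin.
Require Import Defs.
Open Scope R_scope.

Lemma fsum_ext : forall n (f g : Fin.t n -> R), (forall i, f i = g i) -> fsum n f = fsum n g.
Proof. induction n; intros f g H; simpl; auto. rewrite H, (IHn _ (fun i => g (Fin.FS i))); auto. Qed.

Lemma fsum_plus : forall n (f g : Fin.t n -> R), fsum n (fun i => f i + g i) = fsum n f + fsum n g.
Proof. induction n; intros f g; simpl. lra. rewrite IHn. lra. Qed.

Lemma fsum_scal : forall n c (f : Fin.t n -> R), fsum n (fun i => c * f i) = c * fsum n f.
Proof. induction n; intros c f; simpl. lra. rewrite IHn. lra. Qed.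

Lemma fsum_le : forall n (f g : Fin.t n -> R), (forall i, f i <= g i) -> fsum n f <= fsum n g.
Proof. induction n; intros f g H; simpl. lra. specialize (IHn (fun i => f (Fin.FS i)) (fun i => g (Fin.FS i))).
  assert (H1 := H Fin.F1). assert (fsum n (fun i => f (Fin.FS i)) <= fsum n (fun i => g (Fin.FS i))) by (apply IHn; auto). lra. Qed.

Lemma fsum_nonneg : forall n (f : Fin.t n -> R), (forall i, 0 <= f i) -> 0 <= fsum n f.
Proof. intros n f H. replace 0 with (fsum n (fun _ => 0)). apply fsum_le; auto.
  clear. induction n; simpl; auto. rewrite IHn; lra. Qed.

Lemma fsum_const : forall n c, fsum n (fun _ => c) = INR n * c.
Proof. induction n; intros c. simpl; lra. cbn [fsum]. rewrite IHn, S_INR. lra. Qed.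

Lemma fsum_ge_term : forall n (f : Fin.t n -> R), (forall i, 0 <= f i) -> forall i, f i <= fsum n f.
Proof. induction n; intros f H i. apply (Fin.case0 (fun i => f i <= fsum 0 f) i).
  apply (Fin.caseS' i (fun i => f i <= fsum (S n) f)); simpl.
  - assert (0 <= fsum n (fun i => f (Fin.FS i))) by (apply fsum_nonneg; auto). lra.
  - intros j. assert (f (Fin.FS j) <= fsum n (fun i => f (Fin.FS i))) by (apply (IHn (fun i => f (Fin.FS i))); auto).
    specialize (H Fin.F1). lra. Qed.

Lemma fprod_nonneg : forall n (f : Fin.t n -> R), (forall i, 0 <= f i) -> 0 <= fprod n f.
Proof. induction n; intros f H; simpl. lra. apply Rmult_le_pos; auto. Qed.

Lemma fprod_le : forall n (f g : Fin.t n -> R), (forall i, 0 <= f i <= g i) -> fprod n f <= fprod n g.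
Proof. induction n; intros f g H; simpl. lra.
  assert (H1 := H Fin.F1). assert (fprod n (fun i => f (Fin.FS i)) <= fprod n (fun i => g (Fin.FS i))) by (apply IHn; auto).
  assert (0 <= fprod n (fun i => f (Fin.FS i))) by (apply fprod_nonneg; intros; apply H). nra. Qed.

Lemma fprod_cont : forall n (d : Fin.t n -> R), (forall i, 0 <= d i) -> forall eps, 0 < eps ->
  exists eta, 0 < eta /\ forall t, 0 <= t <= eta -> fprod n (fun i => d i + t) <= fprod n d + eps.
Proof. induction n; intros d Hd eps Heps; simpl.
  - exists 1; split; intros; lra.
  - set (d0 := d Fin.F1). assert (Hd0 : 0 <= d0) by apply Hd.
    set (P := fprod n (fun i => d (Fin.FS i))).
    assert (HP : 0 <= P) by (apply fprod_nonneg; intros; apply Hd).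
    set (e1 := eps / (2 * (d0 + 1))).
    assert (He1 : 0 < e1) by (unfold e1; apply Rdiv_lt_0_compat; lra).
    destruct (IHn (fun i => d (Fin.FS i)) (fun i => Hd _) e1 He1) as [eta1 [Heta1 H1]].
    set (eta := Rmin eta1 (Rmin 1 (eps / (2 * (P + e1 + 1))))).
    assert (He2 : 0 < eps / (2 * (P + e1 + 1))) by (apply Rdiv_lt_0_compat; lra).
    exists eta. split. unfold eta; repeat apply Rmin_glb_lt; lra.
    intros t [Ht0 Ht]. assert (t <= eta1) by (eapply Rle_trans; [exact Ht| apply Rmin_l]).
    assert (Ht2 : t <= eps / (2 * (P + e1 + 1))) by (eapply Rle_trans; [exact Ht| unfold eta; eapply Rle_trans; [apply Rmin_r| apply Rmin_r]]).
    specialize (H1 t (conj Ht0 H)). fold P in H1.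
    set (Q := fprod n (fun i => d (Fin.FS i) + t)) in *.
    assert (HQ : 0 <= Q) by (apply fprod_nonneg; intros; pose proof (Hd (Fin.FS i)); lra).
    change ((d0 + t) * Q <= d0 * P + eps).
    assert (E1 : d0 * e1 <= eps / 2).
    { unfold e1. unfold Rdiv. rewrite Rinv_mult. 
      assert (0 < / (d0 + 1)) by (apply Rinv_0_lt_compat; lra).
      assert (d0 * / (d0+1) <= 1). { apply (Rmult_le_reg_r (d0+1)). lra. rewrite Rmult_assoc, Rinv_l; lra. }
      replace (d0 * (eps * (/ 2 * / (d0 + 1)))) with ((d0 * / (d0+1)) * (eps / 2)) by (unfold Rdiv; ring).
      assert (0 < eps/2) by lra. nra. }
    assert (E2 : t * (P + e1 + 1) <= eps / 2).
    { apply (Rmult_le_compat_r (P + e1 + 1)) in Ht2; [|lra].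
      replace (eps / (2 * (P + e1 + 1)) * (P + e1 + 1)) with (eps/2) in Ht2 by (field; lra). lra. }
    nra.
Qed.


Lemma vnorm_ge0 : forall n (v : vec n), 0 <= vnorm v.
Proof. intros; apply sqrt_pos. Qed.

Lemma vnorm_ext : forall n (u v : vec n), (forall i, u i = v i) -> vnorm u = vnorm v.
Proof. intros n u v H; unfold vnorm; f_equal; apply fsum_ext; intros; rewrite H; auto. Qed.

Lemma fsum_sq_nonneg : forall n (v : vec n), 0 <= fsum n (fun i => v i ^ 2).
Proof. intros; apply fsum_nonneg; intros; apply pow2_ge_0. Qed.

Lemma vnorm_zero : forall n (v : vec n), (forall i, v i = 0) -> vnorm v = 0.
Proof. intros n v H; unfold vnorm. rewrite (fsum_ext n _ (fun _ => 0)). rewrite fsum_const. rewrite Rmult_0_r. apply sqrt_0.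
 intros; rewrite H; ring. Qed.

Lemma coord_le : forall n (v : vec n) i, Rabs (v i) <= vnorm v.
Proof. intros n v i. rewrite <- sqrt_Rsqr_abs. unfold vnorm. apply sqrt_le_1_alt.
  unfold Rsqr. replace (v i * v i) with (v i ^ 2) by ring. apply (fsum_ge_term n (fun i => v i ^ 2)).
  intros; apply pow2_ge_0. Qed.

Lemma vnorm_bound : forall n (v : vec n) c, 0 <= c -> (forall i, Rabs (v i) <= c) -> vnorm v <= sqrt (INR n) * c.
Proof. intros n v c Hc H. unfold vnorm. replace c with (sqrt (c^2)) at 1.
  rewrite <- sqrt_mult. apply sqrt_le_1_alt. rewrite <- fsum_const. apply fsum_le. intros i.
  specialize (H i). assert (0 <= Rabs (v i)) by apply Rabs_pos. replace (v i ^ 2) with (Rabs (v i) ^ 2). nra.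
  rewrite <- Rsqr_pow2, <- Rsqr_abs. unfold Rsqr; ring. apply pos_INR. apply pow2_ge_0.
  replace (c^2) with (Rsqr c) by (unfold Rsqr; ring). rewrite sqrt_Rsqr; auto. Qed.

Lemma vnorm_scal : forall n c (v : vec n), vnorm (fun i => c * v i) = Rabs c * vnorm v.
Proof. intros. unfold vnorm. rewrite (fsum_ext n _ (fun i => c^2 * v i ^ 2)) by (intros; ring).
  rewrite fsum_scal, sqrt_mult. f_equal. rewrite <- Rsqr_pow2, sqrt_Rsqr_abs; auto. apply pow2_ge_0. apply fsum_sq_nonneg. Qed.

Lemma sq_le_aux : forall y X, 0 <= X -> y^2 <= X^2 -> y <= X.
Proof. intros. nra. Qed.

Lemma CS : forall n (u v : vec n), (fsum n (fun i => u i * v i))^2 <= fsum n (fun i => u i ^ 2) * fsum n (fun i => v i ^ 2).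
Proof. induction n; intros u v. simpl; lra. cbn [fsum].
  set (S := fsum n (fun i => u (Fin.FS i) * v (Fin.FS i))).
  set (U := fsum n (fun i => u (Fin.FS i) ^ 2)). set (V := fsum n (fun i => v (Fin.FS i) ^ 2)).
  assert (H := IHn (fun i => u (Fin.FS i)) (fun i => v (Fin.FS i))). cbv beta in H; fold S U V in H.
  assert (HU : 0 <= U) by apply (fsum_sq_nonneg n (fun i => u (Fin.FS i))).
  assert (HV : 0 <= V) by apply (fsum_sq_nonneg n (fun i => v (Fin.FS i))).
  set (a := u Fin.F1) in *. set (b := v Fin.F1) in *.
  assert (2 * a * b * S <= a^2 * V + b^2 * U).
  { apply sq_le_aux. assert (0 <= a^2) by apply pow2_ge_0. assert (0 <= b^2) by apply pow2_ge_0. apply Rplus_le_le_0_compat; apply Rmult_le_pos; auto.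
    assert ((2*a*b*S)^2 = 4 * (a^2*b^2) * S^2) by ring.
    assert (0 <= a^2*b^2) by nra.
    assert (4 * (a^2*b^2) * S^2 <= 4 * (a^2*b^2) * (U * V)) by (apply Rmult_le_compat_l; [lra| assumption]).
    assert (0 <= (a^2*V - b^2*U)^2) by apply pow2_ge_0.
    assert ((a^2*V + b^2*U)^2 = (a^2*V - b^2*U)^2 + 4 * (a^2*b^2) * (U * V)) by ring. lra. }
  idtac. match goal with |- ?L <= ?R => assert (L = a^2*b^2 + 2*a*b*S + S^2) by ring; assert (R = a^2*b^2 + (a^2*V + b^2*U) + U*V) by ring end.
  lra. Qed.

Lemma vnorm_tri : forall n (u v : vec n), vnorm (fun i => u i + v i) <= vnorm u + vnorm v.
Proof. intros. unfold vnorm. 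
  set (U := fsum n (fun i => u i ^ 2)). set (V := fsum n (fun i => v i ^ 2)).
  set (S := fsum n (fun i => u i * v i)).
  assert (HU : 0 <= U) by apply fsum_sq_nonneg. assert (HV : 0 <= V) by apply fsum_sq_nonneg.
  rewrite (fsum_ext n _ (fun i => u i ^ 2 + (2 * (u i * v i) + v i ^ 2))) by (intros; ring).
  rewrite fsum_plus, fsum_plus, fsum_scal. fold U V S.
  assert (HS : S <= sqrt U * sqrt V).
  { apply sq_le_aux. apply Rmult_le_pos; apply sqrt_pos.
    replace ((sqrt U * sqrt V)^2) with (Rsqr (sqrt U) * Rsqr (sqrt V)) by (unfold Rsqr; ring).
    rewrite !Rsqr_sqrt; auto. apply CS. }
  rewrite <- (sqrt_Rsqr (sqrt U + sqrt V)) by (pose proof (sqrt_pos U); pose proof (sqrt_pos V); lra).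
  apply sqrt_le_1_alt. unfold Rsqr.
  replace ((sqrt U + sqrt V) * (sqrt U + sqrt V)) with (Rsqr (sqrt U) + 2 * (sqrt U * sqrt V) + Rsqr (sqrt V)) by (unfold Rsqr; ring).
  rewrite !Rsqr_sqrt; auto. lra. Qed.

Lemma vdist_refl : forall n (p : vec n), vdist p p = 0.
Proof. intros; unfold vdist; apply vnorm_zero; intros; ring. Qed.

Lemma vdist_sym : forall n (p q : vec n), vdist p q = vdist q p.
Proof. intros; unfold vdist. rewrite (vnorm_ext n (fun i => q i - p i) (fun i => -1 * (p i - q i))) by (intros; ring).
  rewrite vnorm_scal. replace (Rabs (-1)) with 1 by (rewrite Rabs_left; lra). ring. Qed.

Lemma vdist_tri : forall n (p q r : vec n), vdist p r <= vdist p q + vdist q r.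
Proof. intros; unfold vdist. rewrite (vnorm_ext n (fun i => p i - r i) (fun i => (p i - q i) + (q i - r i))) by (intros; ring).
  apply vnorm_tri. Qed.

Lemma vdist_ge0 : forall n (p q : vec n), 0 <= vdist p q.
Proof. intros; apply vnorm_ge0. Qed.

Lemma vnorm_dist0 : forall n (p : vec n), vnorm p = vdist p (fun _ => 0).
Proof. intros; unfold vdist; apply vnorm_ext; intros; ring. Qed.

Lemma vnorm_le_dist : forall n (p q : vec n), vnorm p <= vdist p q + vnorm q.
Proof. intros. rewrite !vnorm_dist0. apply vdist_tri. Qed.

Lemma vdist_le_norm : forall n (p q : vec n), vdist p q <= vnorm p + vnorm q.
Proof. intros. rewrite !vnorm_dist0. rewrite (vdist_sym n q). apply vdist_tri. Qed.

Lemma coord_dist : forall n (p q : vec n) i, Rabs (p i - q i) <= vdist p q.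
Proof. intros; apply (coord_le n (fun i => p i - q i)). Qed.


Lemma choice_nat : forall (T : Type) (P : nat -> T -> Prop), (forall k, exists x, P k x) -> exists f, forall k, P k (f k).
Proof. intros T P H. exists (fun k => proj1_sig (constructive_indefinite_description _ (H k))).
  intros k. exact (proj2_sig (constructive_indefinite_description _ (H k))). Qed.

Lemma sum_mono : forall (h : nat -> R), (forall k, 0 <= h k) -> forall N M, (N <= M)%nat -> sum_f_R0 h N <= sum_f_R0 h M.
Proof. intros h H N M HNM. induction HNM. lra. simpl. specialize (H (S m)). lra. Qed.

Lemma partial_le_lim : forall (f : nat -> R) s, (forall k, 0 <= f k) -> infinite_sum f s -> forall N, sum_f_R0 f N <= s.
Proof. intros f s Hf Hs N. destruct (Rle_dec (sum_f_R0 f N) s) as [|Hn]; auto. exfalso.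
  destruct (Hs (sum_f_R0 f N - s)) as [M HM]. lra.
  specialize (HM (max N M) ltac:(lia)). assert (sum_f_R0 f N <= sum_f_R0 f (max N M)) by (apply sum_mono; auto; lia).
  unfold Rdist in HM. apply Rabs_def2 in HM. lra. Qed.

Lemma series_bounded : forall (h : nat -> R) Bd, (forall k, 0 <= h k) -> (forall N, sum_f_R0 h N <= Bd) ->
  exists L, infinite_sum h L /\ L <= Bd.
Proof. intros h Bd Hh HB. destruct (growing_cv (sum_f_R0 h)) as [L HL].
  - intros N; simpl. specialize (Hh (S N)); lra.
  - exists Bd. intros x [N ->]. apply HB.
  - exists L. split. exact HL. destruct (Rle_dec L Bd) as [|Hn]; auto. exfalso.
    destruct (HL (L - Bd)) as [M HM]. lra. specialize (HM M (le_n _)). specialize (HB M).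
    unfold Rdist in HM. apply Rabs_def2 in HM. lra. Qed.

Lemma sum_nonneg : forall (h : nat -> R), (forall k, 0 <= h k) -> forall N, 0 <= sum_f_R0 h N.
Proof. intros h H N. induction N; simpl. apply H. specialize (H (S N)); lra. Qed.

Lemma lim_nonneg : forall (f : nat -> R) s, (forall k, 0 <= f k) -> infinite_sum f s -> 0 <= s.
Proof. intros. pose proof (partial_le_lim f s H H0 0). pose proof (sum_nonneg f H 0). lra. Qed.

Lemma geom_sum : forall eps N, sum_f_R0 (fun k => eps * (/2)^(S k)) N = eps - eps * (/2)^(S N).
Proof. intros eps N. induction N. simpl; field.
  change (sum_f_R0 (fun k => eps * (/2)^(S k)) N + eps * (/2)^(S (S N)) = eps - eps * (/ 2) ^ S (S N)).
  rewrite IHN. simpl. field. Qed.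

Lemma geom_pos : forall k, 0 < (/2)^k.
Proof. intros; apply pow_lt; lra. Qed.

Lemma box_vol_nonneg : forall n (a b : vec n), 0 <= box_vol a b.
Proof. intros; apply fprod_nonneg; intros; apply Rmax_l. Qed.

Lemma cover_nonneg : forall n (E : set n) s, cover_sum E s -> 0 <= s.
Proof. intros n E s [a [b [_ Hs]]]. eapply lim_nonneg; [|exact Hs]. intros; apply box_vol_nonneg. Qed.

Lemma glb_exists : forall (S : R -> Prop), (exists s, S s) -> (forall s, S s -> 0 <= s) -> exists m, is_glb S m.
Proof. intros S [s0 Hs0] Hpos. destruct (completeness (fun y => S (- y))) as [l [Hl1 Hl2]].
  - exists 0. intros y Hy. specialize (Hpos _ Hy). lra.
  - exists (- s0). rewrite Ropp_involutive; auto.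
  - exists (- l). split.
    + intros s Hs. assert (- s <= l) by (apply Hl1; rewrite Ropp_involutive; auto). lra.
    + intros m' Hm'. assert (l <= - m'). { apply Hl2. intros y Hy. specialize (Hm' _ Hy). lra. } lra. Qed.

Lemma mu_spec : forall n (E : set n), (exists s, cover_sum E s) -> is_glb (cover_sum E) (mu E).
Proof. intros n E H. unfold mu. apply epsilon_spec. apply glb_exists; auto. apply cover_nonneg. Qed.

Lemma mu_le_cover : forall n (E : set n) s, cover_sum E s -> mu E <= s.
Proof. intros n E s H. apply (proj1 (mu_spec n E (ex_intro _ s H))); auto. Qed.

Lemma mu_approx : forall n (E : set n), (exists s, cover_sum E s) -> forall eps, 0 < eps -> exists s, cover_sum E s /\ s < mu E + eps.
Proof. intros n E H eps Heps. destruct (mu_spec n E H) as [H1 H2].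
  destruct (classic (exists s, cover_sum E s /\ s < mu E + eps)) as [|Hn]; auto. exfalso.
  assert (mu E + eps <= mu E). { apply H2. intros s Hs. destruct (Rlt_dec s (mu E + eps)); [exfalso; eauto | lra]. } lra. Qed.

Lemma abs_bet : forall x c, Rabs x <= c -> -c <= x <= c.
Proof. intros x c. unfold Rabs; destruct Rcase_abs; lra. Qed.

Lemma zero_box_vol : forall n (z : vec n), (1 <= n)%nat -> box_vol z z = 0.
Proof. intros n z Hn. destruct n. lia. unfold box_vol. simpl. rewrite Rminus_diag, Rmax_left by lra. ring. Qed.

Lemma cover_bounded : forall n (E : set n) R, (1 <= n)%nat -> (forall p, E p -> vnorm p <= R) -> exists s, cover_sum E s.
Proof. intros n E R Hn HE. 
  set (a := fun k : nat => match k with O => (fun _ : Fin.t n => - R) | _ => (fun _ => 0) end).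
  set (b := fun k : nat => match k with O => (fun _ : Fin.t n => R) | _ => (fun _ => 0) end).
  exists (box_vol (a 0%nat) (b 0%nat)). exists a, b. split.
  - intros p Hp. exists 0%nat. intros i. simpl. pose proof (coord_le n p i). specialize (HE p Hp).
    apply abs_bet. lra.
  - intros eps Heps. exists 0%nat. intros N _. 
    assert (sum_f_R0 (fun k => box_vol (a k) (b k)) N = box_vol (a 0%nat) (b 0%nat)).
    { induction N. reflexivity. simpl sum_f_R0. rewrite IHN. simpl a; simpl b. rewrite zero_box_vol by auto. ring. }
    rewrite H. unfold Rdist. rewrite Rminus_diag, Rabs_R0. lra. Qed.

Lemma mu_mono : forall n (E F : set n), (exists s, cover_sum F s) -> (forall p, E p -> F p) -> mu E <= mu F.
Proof. intros n E F [s0 Hs0] HEF.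
  assert (HE : exists s, cover_sum E s). { exists s0. destruct Hs0 as [a [b [Hc Hs]]]. exists a, b; split; auto. }
  destruct (mu_spec n F (ex_intro _ s0 Hs0)) as [_ H2]. apply H2. intros s [a [b [Hc Hs]]].
  apply mu_le_cover. exists a, b; split; auto. Qed.

Lemma Rmax_plus : forall c t, 0 <= t -> Rmax 0 (c + t) <= Rmax 0 c + t.
Proof. intros. unfold Rmax; repeat destruct Rle_dec; lra. Qed.

Lemma enlarge : forall n (a b : nat -> vec n) s eps, infinite_sum (fun k => box_vol (a k) (b k)) s -> 0 < eps ->
  exists (a' b' : nat -> vec n) (L : R), (forall k i, a' k i < a k i /\ b k i < b' k i) /\ infinite_sum (fun k => box_vol (a' k) (b' k)) L /\ L <= s + eps.
Proof. intros n a b s eps Hs Heps.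
  assert (Hk : forall k, exists eta, 0 < eta /\ box_vol (fun i => a k i - eta) (fun i => b k i + eta) <= box_vol (a k) (b k) + eps * (/2)^(S k)).
  { intros k. destruct (fprod_cont n (fun i => Rmax 0 (b k i - a k i)) (fun i => Rmax_l _ _) (eps * (/2)^(S k))) as [eta [He H]].
    apply Rmult_lt_0_compat; auto; apply geom_pos.
    exists (eta / 2). split. lra. unfold box_vol. eapply Rle_trans; [| apply (H eta); lra].
    apply fprod_le. intros i. split. apply Rmax_l. 
    replace (b k i + eta / 2 - (a k i - eta / 2)) with ((b k i - a k i) + eta) by field. apply Rmax_plus. lra. }
  destruct (choice_nat R _ Hk) as [eta Heta].
  exists (fun k i => a k i - eta k), (fun k i => b k i + eta k).
  destruct (series_bounded (fun k => box_vol (fun i => a k i - eta k) (fun i => b k i + eta k)) (s + eps)) as [L [HL1 HL2]].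
  - intros; apply box_vol_nonneg.
  - intros N. apply Rle_trans with (sum_f_R0 (fun k => box_vol (a k) (b k)) N + sum_f_R0 (fun k => eps * (/2)^(S k)) N).
    + rewrite <- plus_sum. apply sum_Rle. intros k _. apply Heta.
    + rewrite geom_sum. pose proof (partial_le_lim _ s (fun k => box_vol_nonneg n (a k) (b k)) Hs N).
      pose proof (geom_pos (S N)). nra.
  - exists L. split; [|split]; auto. intros k i. pose proof (proj1 (Heta k)). lra. Qed.

Lemma infinite_sum_ext : forall (f g : nat -> R) s, infinite_sum f s -> (forall k, f k = g k) -> infinite_sum g s.
Proof. intros f g s H E eps He. destruct (H eps He) as [N HN]. exists N. intros m Hm.
  rewrite <- (sum_eq f g m) by (intros; auto). auto. Qed.

Definition il {T : Type} (f g : nat -> T) (k : nat) : T := if Nat.even k then f (Nat.div2 k) else g (Nat.div2 k).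

Lemma il_even : forall T (f g : nat -> T) k, il f g (2 * k) = f k.
Proof. intros. unfold il. rewrite Nat.even_even, Nat.div2_double. auto. Qed.

Lemma il_odd : forall T (f g : nat -> T) k, il f g (S (2 * k)) = g k.
Proof. intros. unfold il. replace (S (2*k)) with (2*k+1)%nat by lia. rewrite Nat.even_odd.
  replace (2*k+1)%nat with (S (2*k)) by lia. rewrite Nat.div2_succ_double. auto. Qed.

Lemma il_sum : forall (f g : nat -> R) N, sum_f_R0 (il f g) (S (2 * N)) = sum_f_R0 f N + sum_f_R0 g N.
Proof. intros f g N. induction N.
  - simpl. unfold il; simpl. ring.
  - replace (S (2 * S N)) with (S (S (S (2 * N)))) by lia.
    change (sum_f_R0 (il f g) (S (2 * N)) + il f g (S (S (2*N))) + il f g (S (S (S (2 * N)))) = sum_f_R0 f N + f (S N) + (sum_f_R0 g N + g (S N))).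
    rewrite IHN. replace (S (S (2 * N))) with (2 * S N)%nat by lia. rewrite il_even, il_odd. ring. Qed.

Lemma il_apply : forall T U (h : T -> U) (f g : nat -> T) k, h (il f g k) = il (fun j => h (f j)) (fun j => h (g j)) k.
Proof. intros. unfold il. destruct (Nat.even k); auto. Qed.

Lemma cover_union : forall n (E : set n) (a1 b1 a2 b2 : nat -> vec n) s1 s2,
  (forall p, E p -> (exists k, in_box (a1 k) (b1 k) p) \/ (exists k, in_box (a2 k) (b2 k) p)) ->
  infinite_sum (fun k => box_vol (a1 k) (b1 k)) s1 -> infinite_sum (fun k => box_vol (a2 k) (b2 k)) s2 ->
  exists L, cover_sum E L /\ L <= s1 + s2.
Proof. intros n E a1 b1 a2 b2 s1 s2 HE H1 H2.
  set (h := il (fun k => box_vol (a1 k) (b1 k)) (fun k => box_vol (a2 k) (b2 k))).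
  assert (Hh : forall k, 0 <= h k). { intros k; unfold h, il. destruct (Nat.even k); apply box_vol_nonneg. }
  destruct (series_bounded h (s1 + s2) Hh) as [L [HL1 HL2]].
  { intros N. apply Rle_trans with (sum_f_R0 h (S (2 * N))). apply sum_mono; auto; lia.
    unfold h; rewrite il_sum. 
    pose proof (partial_le_lim _ s1 (fun k => box_vol_nonneg n (a1 k) (b1 k)) H1 N).
    pose proof (partial_le_lim _ s2 (fun k => box_vol_nonneg n (a2 k) (b2 k)) H2 N). lra. }
  exists L; split; auto. exists (il a1 a2), (il b1 b2). split.
  - intros p Hp. destruct (HE p Hp) as [[k Hk]|[k Hk]].
    + exists (2 * k)%nat. rewrite !il_even. auto.
    + exists (S (2 * k))%nat. rewrite !il_odd. auto.
  - apply (infinite_sum_ext h); auto. intros k; unfold h, il. destruct (Nat.even k); auto. Qed.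


Lemma strict_ge : forall phi : nat -> nat, (forall k, (phi k < phi (S k))%nat) -> forall k, (k <= phi k)%nat.
Proof. intros phi H k. induction k. lia. specialize (H k). lia. Qed.

Lemma strict_mono : forall phi : nat -> nat, (forall k, (phi k < phi (S k))%nat) -> forall j k, (j <= k)%nat -> (phi j <= phi k)%nat.
Proof. intros phi H j k Hjk. induction Hjk. lia. specialize (H m). lia. Qed.

Lemma inv_small : forall eta, 0 < eta -> exists N, forall j, (N <= j)%nat -> / (INR j + 1) < eta.
Proof. intros eta He. destruct (archimed (/ eta)) as [H1 _].
  assert (0 <= up (/eta))%Z. { apply le_IZR. assert (0 < / eta) by (apply Rinv_0_lt_compat; auto). lra. }
  exists (Z.to_nat (up (/ eta))). intros j Hj. apply le_INR in Hj. rewrite INR_IZR_INZ, Z2Nat.id in Hj by auto.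
  assert (0 < / eta) by (apply Rinv_0_lt_compat; auto).
  rewrite <- (Rinv_inv eta). apply Rinv_lt_contravar. apply Rmult_lt_0_compat; auto. pose proof (pos_INR j); lra. lra. Qed.

Lemma BW_real : forall (w : nat -> R) R, (forall k, Rabs (w k) <= R) ->
  exists (psi : nat -> nat) l, (forall k, (psi k < psi (S k))%nat) /\
     forall eta, 0 < eta -> exists N, forall k, (N <= k)%nat -> Rabs (w (psi k) - l) < eta.
Proof. intros w R Hw. destruct (Bolzano_Weierstrass w (fun c => -R <= c <= R) (compact_P3 (-R) R)) as [l Hl].
  { intros k; apply abs_bet; auto. }
  assert (Hg : forall N j, exists k, (N <= k)%nat /\ Rabs (w k - l) < / (INR j + 1)).
  { intros N j. assert (Hpos : 0 < / (INR j + 1)) by (apply Rinv_0_lt_compat; pose proof (pos_INR j); lra).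
    destruct (Hl (disc l (mkposreal _ Hpos)) N) as [k [Hk1 Hk2]].
    exists (mkposreal _ Hpos). intros y Hy; auto. exists k; split; auto. }
  assert (Hg2 : forall p : nat * nat, exists k, (fst p <= k)%nat /\ Rabs (w k - l) < / (INR (snd p) + 1)).
  { intros [N j]; apply Hg. }
  set (g := fun p : nat * nat => proj1_sig (constructive_indefinite_description _ (Hg2 p))).
  assert (Hgs : forall p, (fst p <= g p)%nat /\ Rabs (w (g p) - l) < / (INR (snd p) + 1)).
  { intros p. exact (proj2_sig (constructive_indefinite_description _ (Hg2 p))). }
  set (psi := fix psi (j : nat) : nat := match j with O => g (0%nat, 0%nat) | S j' => g (S (psi j'), S j') end).
  assert (Hpsi : forall j, Rabs (w (psi j) - l) < / (INR j + 1)).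
  { intros j; destruct j; simpl psi. apply (Hgs (0%nat,0%nat)). apply (Hgs (S (psi j), S j)). }
  exists psi, l. split.
  - intros k. simpl psi at 2. pose proof (proj1 (Hgs (S (psi k), S k))). simpl in H. lia.
  - intros eta He. destruct (inv_small eta He) as [N HN]. exists N. intros k Hk.
    eapply Rlt_trans. apply Hpsi. apply HN; auto. Qed.

Lemma BW_vec : forall n (u : nat -> vec n) Rb, (forall k i, Rabs (u k i) <= Rb) ->
  exists (phi : nat -> nat) (p : vec n), (forall k, (phi k < phi (S k))%nat) /\
    forall eta, 0 < eta -> exists N, forall k, (N <= k)%nat -> forall i, Rabs (u (phi k) i - p i) < eta.
Proof. induction n; intros u Rb Hu.
  - exists (fun k => k), (fun _ => 0). split. intros; lia. intros eta He. exists 0%nat. intros k _ i. apply (Fin.case0 (fun _ => _) i).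
  - destruct (IHn (fun k i => u k (Fin.FS i)) Rb (fun k i => Hu k (Fin.FS i))) as [phi1 [p1 [Hphi1 Hc1]]].
    destruct (BW_real (fun k => u (phi1 k) Fin.F1) Rb (fun k => Hu _ _)) as [psi [l [Hpsi Hc2]]].
    exists (fun k => phi1 (psi k)), (fun i => Fin.caseS' i (fun _ => RbaseSymbolsImpl.R) l p1). split.
    + intros k. specialize (Hpsi k). pose proof (strict_mono phi1 Hphi1 (S (psi k)) (psi (S k)) Hpsi). specialize (Hphi1 (psi k)). lia.
    + intros eta He. destruct (Hc1 eta He) as [N1 HN1]. destruct (Hc2 eta He) as [N2 HN2].
      exists (max N1 N2). intros k Hk i.
      apply (Fin.caseS' i (fun i => Rabs (u (phi1 (psi k)) i - Fin.caseS' i (fun _ => RbaseSymbolsImpl.R) l p1) < eta)); simpl.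
      * apply HN2. lia.
      * intros j. apply (HN1 (psi k)). pose proof (strict_ge psi Hpsi k). lia. Qed.

Lemma cluster : forall n (u : nat -> vec n) Rb, (forall k, vnorm (u k) <= Rb) ->
  exists p, forall eta, 0 < eta -> forall N, exists k, (N <= k)%nat /\ vdist p (u k) < eta.
Proof. intros n u Rb Hu. destruct (BW_vec n u Rb) as [phi [p [Hphi Hc]]].
  { intros k i. eapply Rle_trans; [apply coord_le | apply Hu]. }
  exists p. intros eta He N.
  set (c := eta / (sqrt (INR n) + 1)).
  assert (Hsq : 0 <= sqrt (INR n)) by apply sqrt_pos.
  assert (Hc0 : 0 < c) by (unfold c; apply Rdiv_lt_0_compat; lra).
  destruct (Hc c Hc0) as [N0 HN0]. exists (phi (max N N0)). split.
  - pose proof (strict_ge phi Hphi (max N N0)). lia.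
  - unfold vdist. eapply Rle_lt_trans. apply vnorm_bound. left; exact Hc0.
    intros i. rewrite Rabs_minus_sym. left. apply HN0. lia.
    unfold c. apply (Rmult_lt_reg_r (sqrt (INR n) + 1)). lra.
    replace (sqrt (INR n) * (eta / (sqrt (INR n) + 1)) * (sqrt (INR n) + 1)) with (sqrt (INR n) * eta) by (field; lra).
    nra. Qed.


Lemma interior_sub : forall n (A : set n) p, interior A p -> A p.
Proof. intros n A p [r [Hr H]]. apply H. rewrite vdist_refl; auto. Qed.

Lemma sub_closure : forall n (A : set n) p, A p -> closure A p.
Proof. intros n A p Hp r Hr. exists p. rewrite vdist_refl; auto. Qed.

Lemma compl_open : forall n (A : set n), (forall p, A p <-> ci A p) -> forall p, ~ A p -> exists r, 0 < r /\ forall q, vdist p q < r -> ~ A q.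
Proof. intros n A HA p Hp. rewrite HA in Hp. unfold ci, closure in Hp.
  apply not_all_ex_not in Hp. destruct Hp as [r Hr]. apply imply_to_and in Hr. destruct Hr as [Hr Hn].
  exists (r/2). split. lra. intros q Hq Aq. rewrite HA in Aq. destruct (Aq (r/2)) as [q' [Hq'1 Hq'2]]. lra.
  apply Hn. exists q'. split; auto. pose proof (vdist_tri n p q q'). lra. Qed.

Lemma boundary_closed : forall n (A : set n) e, (forall r, 0 < r -> exists q, boundary A q /\ vdist e q < r) -> boundary A e.
Proof. intros n A e H. split.
  - intros r Hr. destruct (H (r/2)) as [q [[Hq1 _] Hq2]]. lra. destruct (Hq1 (r/2)) as [q' [Hq'1 Hq'2]]. lra.
    exists q'. split; auto. pose proof (vdist_tri n e q q'). lra.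
  - intros [r [Hr Hi]]. destruct (H (r/2)) as [q [[_ Hq1] Hq2]]. lra. apply Hq1. exists (r/2). split. lra.
    intros q' Hq'. apply Hi. pose proof (vdist_tri n e q q'). lra. Qed.

Lemma closure_bounded : forall n (A : set n) M, (forall p, A p -> vnorm p <= M) -> forall p, closure A p -> vnorm p <= M.
Proof. intros n A M HM p Hp. destruct (Rle_dec (vnorm p) M) as [|Hn]; auto. exfalso.
  destruct (Hp (vnorm p - M)) as [q [Hq1 Hq2]]. lra. pose proof (HM q Hq1). pose proof (vnorm_le_dist n p q). lra. Qed.

Lemma seg_dist : forall n (p0 q0 : vec n) t t',
  vdist (fun i => p0 i + t * (q0 i - p0 i)) (fun i => p0 i + t' * (q0 i - p0 i)) = Rabs (t - t') * vdist q0 p0.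
Proof. intros. unfold vdist. rewrite <- vnorm_scal. apply vnorm_ext. intros; ring. Qed.

Lemma boundary_nonempty : forall n (A : set n) M, (1 <= n)%nat -> nonempty A -> (forall p, A p -> vnorm p <= M) -> exists e, boundary A e.
Proof. intros n A M Hn [p0 Hp0] HM.
  set (q0 := fun _ : Fin.t n => M + 1).
  assert (Hq0 : ~ A q0).
  { intros Hq. pose proof (HM q0 Hq). pose proof (HM p0 Hp0). pose proof (vnorm_ge0 n p0).
    assert (i0 : Fin.t n) by (destruct n; [lia | exact Fin.F1]).
    pose proof (coord_le n q0 i0). change (q0 i0) with (M+1) in H2. rewrite Rabs_right in H2 by lra. lra. }
  set (s := fun t => fun i => p0 i + t * (q0 i - p0 i)).
  set (L := vdist q0 p0). assert (HL : 0 <= L) by apply vdist_ge0.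
  assert (Hs0 : s 0 = p0). { apply functional_extensionality; intros; unfold s; ring. }
  assert (Hs1 : s 1 = q0). { apply functional_extensionality; intros; unfold s; ring. }
  set (S := fun t => 0 <= t <= 1 /\ A (s t)).
  destruct (completeness S) as [ts [Hub Hlub]].
  { exists 1. intros t [Ht _]. lra. }
  { exists 0. split. lra. rewrite Hs0; auto. }
  assert (Hts0 : 0 <= ts). { apply Hub. split. lra. rewrite Hs0; auto. }
  assert (Hts1 : ts <= 1). { apply Hlub. intros t [Ht _]. lra. }
  exists (s ts). split.
  - intros r Hr. set (d := r / (L + 1)). assert (Hd : 0 < d) by (unfold d; apply Rdiv_lt_0_compat; lra).
    destruct (classic (exists t, S t /\ ts - d < t)) as [[t [Ht1 Ht2]]|Hn1].
    + exists (s t). split. apply Ht1. unfold s; rewrite seg_dist. fold L. assert (t <= ts) by (apply Hub; auto).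
      rewrite Rabs_right by lra. assert ((ts - t) * L <= d * L) by (apply Rmult_le_compat_r; lra).
      assert (d * L < d * (L + 1)) by (apply Rmult_lt_compat_l; lra). unfold d in *. 
      replace (r / (L + 1) * (L + 1)) with r in H1 by (field; lra). lra.
    + exfalso. assert (ts <= ts - d). { apply Hlub. intros t Ht. destruct (Rle_dec t (ts - d)); auto. exfalso; apply Hn1; exists t; split; auto; lra. } lra.
  - intros [r [Hr Hi]]. destruct (Req_dec ts 1) as [E1|E1].
    + apply Hq0. rewrite <- Hs1. rewrite <- E1. apply Hi. rewrite vdist_refl; auto.
    + set (d := r / (L + 1)). assert (Hd : 0 < d) by (unfold d; apply Rdiv_lt_0_compat; lra).
      set (t := Rmin 1 (ts + d / 2)). assert (Ht1 : ts < t) by (unfold t; apply Rmin_glb_lt; lra).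
      assert (Ht2 : t <= ts + d / 2) by apply Rmin_r. assert (Ht3 : t <= 1) by apply Rmin_l.
      assert (S t). { split. lra. apply Hi. unfold s; rewrite seg_dist. fold L. rewrite Rabs_left by lra.
        assert ((- (ts - t)) * L <= (d/2) * L) by (apply Rmult_le_compat_r; lra).
        assert ((d/2) * L < d * (L + 1)) by nra. unfold d in *. 
        replace (r / (L + 1) * (L + 1)) with r in H0 by (field; lra). lra. }
      specialize (Hub t H). lra. Qed.

Definition closedP {n} (E : set n) := forall e, (forall r, 0 < r -> exists q, E q /\ vdist e q < r) -> E e.

Lemma dist_exists : forall n (E : set n) M, closedP E -> (forall e, E e -> vnorm e <= M) -> (exists e, E e) ->
  forall p, is_min_dist p E (dist_set p E).
Proof. intros n E M HE HM [e0 He0] p. unfold dist_set. apply epsilon_spec.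
  destruct (glb_exists (fun d => exists e, E e /\ d = vdist p e)) as [d0 [Hd1 Hd2]].
  { exists (vdist p e0); eauto. }
  { intros s [e [_ ->]]. apply vdist_ge0. }
  assert (Hk : forall k, exists e, E e /\ vdist p e < d0 + / (INR k + 1)).
  { intros k. assert (Hpos : 0 < / (INR k + 1)) by (apply Rinv_0_lt_compat; pose proof (pos_INR k); lra).
    destruct (classic (exists e, E e /\ vdist p e < d0 + / (INR k + 1))) as [|Hn]; auto. exfalso.
    assert (d0 + / (INR k + 1) <= d0); [|lra]. apply Hd2. intros s [e [He ->]].
    destruct (Rlt_dec (vdist p e) (d0 + / (INR k + 1))); [exfalso; eauto | lra]. }
  destruct (choice_nat _ _ Hk) as [u Hu].
  destruct (cluster n u M) as [e He]. { intros k; apply HM, Hu. }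
  assert (HEe : E e). { apply HE. intros r Hr. destruct (He r Hr 0%nat) as [k [_ Hk2]]. exists (u k); split; auto. apply Hu. }
  assert (Hge : d0 <= vdist p e) by (apply Hd1; eauto).
  assert (Hle : vdist p e <= d0).
  { destruct (Rle_dec (vdist p e) d0) as [|Hn]; auto. exfalso.
    set (eta := (vdist p e - d0) / 3). assert (Heta : 0 < eta) by (unfold eta; lra).
    destruct (inv_small eta Heta) as [N HN]. destruct (He eta Heta N) as [k [Hk1 Hk2]].
    pose proof (proj2 (Hu k)). pose proof (HN k Hk1). pose proof (vdist_tri n p (u k) e). rewrite (vdist_sym n (u k) e) in H1.
    unfold eta in *. lra. }
  exists d0. split. exists e. split; auto. lra. intros e' He'. apply Hd1. eauto. Qed.

Section DistFacts.
Variable n : nat.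
Variable E : set n.
Variable M : R.
Hypothesis Hmin : forall p, is_min_dist p E (dist_set p E).
Hypothesis HM : forall e, E e -> vnorm e <= M.

Lemma dist_nonneg : forall p, 0 <= dist_set p E.
Proof. intros p. destruct (Hmin p) as [[e [_ He]] _]. rewrite <- He. apply vdist_ge0. Qed.

Lemma dist_zero : forall p, E p -> dist_set p E = 0.
Proof. intros p Hp. pose proof (dist_nonneg p). destruct (Hmin p) as [_ H2]. specialize (H2 p Hp). rewrite vdist_refl in H2. lra. Qed.

Lemma dist_lip : forall p q, dist_set q E <= dist_set p E + vdist p q.
Proof. intros p q. destruct (Hmin p) as [[e [He1 He2]] _]. destruct (Hmin q) as [_ H2]. specialize (H2 e He1).
  pose proof (vdist_tri n q p e). rewrite (vdist_sym n q p) in H. lra. Qed.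

Lemma dist_lip_abs : forall p q, Rabs (dist_set q E - dist_set p E) <= vdist p q.
Proof. intros p q. pose proof (dist_lip p q). pose proof (dist_lip q p). rewrite vdist_sym in H0.
  unfold Rabs; destruct Rcase_abs; lra. Qed.

Lemma dist_upper : forall p, dist_set p E <= vnorm p + M.
Proof. intros p. destruct (Hmin p) as [[e [He1 He2]] _]. rewrite <- He2. pose proof (vdist_le_norm n p e). pose proof (HM e He1). lra. Qed.

Lemma dist_lower : forall p, vnorm p - M <= dist_set p E.
Proof. intros p. destruct (Hmin p) as [[e [He1 He2]] _]. rewrite <- He2. pose proof (vnorm_le_dist n p e). pose proof (HM e He1). lra. Qed.
End DistFacts.

Lemma dS_in : forall n (A : set n) p, A p -> dS p A = dist_set p (boundary A).
Proof. intros n A p Hp. unfold dS. 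
  assert (H := epsilon_spec (inhabits 0) (fun d => (A p -> d = dist_set p (boundary A)) /\ (~ A p -> d = - dist_set p (boundary A)))).
  apply H; auto. exists (dist_set p (boundary A)). split; auto. intros; contradiction. Qed.

Lemma dS_out : forall n (A : set n) p, ~ A p -> dS p A = - dist_set p (boundary A).
Proof. intros n A p Hp. unfold dS. 
  assert (H := epsilon_spec (inhabits 0) (fun d => (A p -> d = dist_set p (boundary A)) /\ (~ A p -> d = - dist_set p (boundary A)))).
  apply H; auto. exists (- dist_set p (boundary A)). split; auto. intros; contradiction. Qed.


Section Good.
Variable n : nat.
Hypothesis Hn : (1 <= n)%nat.
Variable A : set n.
Hypothesis HA : in_Jn A.
Hypothesis HAne : nonempty A.
Variable M : R.
Hypothesis HM : forall p, A p -> vnorm p <= M.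

Lemma bd_bound : forall e, boundary A e -> vnorm e <= M.
Proof. intros e [He _]. apply (closure_bounded n A M HM e He). Qed.

Lemma good_min : forall p, is_min_dist p (boundary A) (dist_set p (boundary A)).
Proof. apply (dist_exists n (boundary A) M). intros e He. apply boundary_closed. auto.
  apply bd_bound. apply (boundary_nonempty n A M Hn HAne HM). Qed.

Lemma M_nonneg : 0 <= M.
Proof. destruct HAne as [p Hp]. pose proof (HM p Hp). pose proof (vnorm_ge0 n p). lra. Qed.

Lemma dS_abs : forall p, Rabs (dS p A) <= vnorm p + M.
Proof. intros p. pose proof (dist_nonneg n _ good_min p). pose proof (dist_upper n _ M good_min bd_bound p).
  destruct (classic (A p)) as [H1|H1]; [rewrite dS_in by auto | rewrite dS_out by auto].
  rewrite Rabs_right; lra. rewrite Rabs_left1; lra. Qed.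

Lemma dS_far : forall p, M < vnorm p -> vnorm p - M <= - dS p A <= vnorm p + M.
Proof. intros p Hp. assert (~ A p) by (intros H; pose proof (HM p H); lra). rewrite dS_out by auto.
  pose proof (dist_upper n _ M good_min bd_bound p). pose proof (dist_lower n _ M good_min bd_bound p). lra. Qed.

Lemma dS_cont : forall p eta, 0 < eta -> exists r, 0 < r /\ forall q, vdist p q < r -> Rabs (dS q A - dS p A) < eta.
Proof. intros p eta He. destruct HA as [_ [Hci _]].
  destruct (classic (A p)) as [Hp|Hp].
  - destruct (classic (interior A p)) as [[r0 [Hr0 Hi]]|Hni].
    + exists (Rmin r0 eta). split. apply Rmin_glb_lt; auto. intros q Hq.
      assert (Hq0 : vdist p q < r0) by (eapply Rlt_le_trans; [exact Hq | apply Rmin_l]).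
      assert (Hq1 : vdist p q < eta) by (eapply Rlt_le_trans; [exact Hq | apply Rmin_r]).
      rewrite !dS_in by auto. pose proof (dist_lip_abs n _ good_min p q). lra.
    + assert (Hb : boundary A p) by (split; [apply sub_closure; auto | auto]).
      exists eta. split; auto. intros q Hq. rewrite (dS_in n A p Hp), (dist_zero n _ good_min p Hb), Rminus_0_r.
      pose proof (dist_nonneg n _ good_min q). pose proof (dist_lip n _ good_min p q). rewrite (dist_zero n _ good_min p Hb) in H0.
      destruct (classic (A q)); [rewrite dS_in by auto | rewrite dS_out by auto].
      rewrite Rabs_right; lra. rewrite Rabs_left1; lra.
  - destruct (compl_open n A Hci p Hp) as [r0 [Hr0 Hi]].
    exists (Rmin r0 eta). split. apply Rmin_glb_lt; auto. intros q Hq.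
    assert (Hq0 : vdist p q < r0) by (eapply Rlt_le_trans; [exact Hq | apply Rmin_l]).
    assert (Hq1 : vdist p q < eta) by (eapply Rlt_le_trans; [exact Hq | apply Rmin_r]).
    rewrite !dS_out by auto. pose proof (dist_lip_abs n _ good_min p q).
    replace (- dist_set q (boundary A) - - dist_set p (boundary A)) with (- (dist_set q (boundary A) - dist_set p (boundary A))) by ring.
    rewrite Rabs_Ropp. lra. Qed.
End Good.


Lemma fin_min : forall n (P : Fin.t n -> R -> Prop), (forall i r r', P i r -> 0 < r' <= r -> P i r') ->
  (forall i, exists r, 0 < r /\ P i r) -> exists r, 0 < r /\ forall i, P i r.
Proof. induction n; intros P Hm H.
  - exists 1. split. lra. intros i; apply (Fin.case0 (fun i => P i 1) i).
  - destruct (IHn (fun i => P (Fin.FS i))) as [r1 [Hr1 H1]]. intros; eapply Hm; eauto. intros; apply H.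
    destruct (H Fin.F1) as [r0 [Hr0 H0]]. exists (Rmin r0 r1). split. apply Rmin_glb_lt; auto.
    intros i. apply (Fin.caseS' i (fun i => P i (Rmin r0 r1))).
    + eapply Hm; eauto. split. apply Rmin_glb_lt; auto. apply Rmin_l.
    + intros j. eapply Hm; eauto. split. apply Rmin_glb_lt; auto. apply Rmin_r. Qed.

Lemma boxes_open : forall n (a b : nat -> vec n) p, (exists k, forall i, a k i < p i < b k i) ->
  exists r, 0 < r /\ forall q, vdist p q < r -> exists k, forall i, a k i < q i < b k i.
Proof. intros n a b p [k Hk].
  destruct (fin_min n (fun i r => a k i < p i - r /\ p i + r < b k i)) as [r [Hr H]].
  - intros i r r' [H1 H2] [H3 H4]. split; lra.
  - intros i. specialize (Hk i). exists (Rmin (p i - a k i) (b k i - p i) / 2). split.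
    apply Rdiv_lt_0_compat; [apply Rmin_glb_lt; lra | lra].
    pose proof (Rmin_l (p i - a k i) (b k i - p i)). pose proof (Rmin_r (p i - a k i) (b k i - p i)).
    pose proof (Rmin_glb_lt (p i - a k i) (b k i - p i) 0 ltac:(lra) ltac:(lra)). split; lra.
  - exists r. split; auto. intros q Hq. exists k. intros i. specialize (H i). pose proof (coord_dist n p q i).
    apply abs_bet in H0. lra. Qed.

Lemma eventually : forall n (W : set n) (Q : R -> vec n -> Prop) Rb xs,
  (forall p, W p -> exists r, 0 < r /\ forall q, vdist p q < r -> W q) ->
  (forall x p, Rabs (x - xs) < 1 -> Q x p -> vnorm p <= Rb) ->
  (forall p, (forall eta, 0 < eta -> exists x q, Rabs (x - xs) < eta /\ vdist p q < eta /\ Q x q) -> W p) ->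
  exists delta, 0 < delta /\ forall x p, Rabs (x - xs) < delta -> Q x p -> W p.
Proof. intros n W Q Rb xs HW HB HL.
  destruct (classic (exists delta, 0 < delta /\ forall x p, Rabs (x - xs) < delta -> Q x p -> W p)) as [|Hn]; auto. exfalso.
  assert (Hk : forall k, exists xp : R * vec n, Rabs (fst xp - xs) < / (INR k + 1) /\ Q (fst xp) (snd xp) /\ ~ W (snd xp)).
  { intros k. assert (Hpos : 0 < / (INR k + 1)) by (apply Rinv_0_lt_compat; pose proof (pos_INR k); lra).
    apply NNPP. intros Hc. apply Hn. exists (/ (INR k + 1)). split; auto. intros x p Hx HQ.
    apply NNPP. intros HnW. apply Hc. exists (x, p). simpl. auto. }
  destruct (choice_nat _ _ Hk) as [u Hu].
  assert (Hle1 : forall k, / (INR k + 1) <= 1).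
  { intros k. rewrite <- Rinv_1. apply Rinv_le_contravar. lra. pose proof (pos_INR k); lra. }
  destruct (cluster n (fun k => snd (u k)) Rb) as [p Hp].
  { intros k. destruct (Hu k) as [H1 [H2 _]]. apply (HB (fst (u k))); auto. specialize (Hle1 k). lra. }
  assert (HWp : W p).
  { apply HL. intros eta He. destruct (inv_small eta He) as [N HN]. destruct (Hp eta He N) as [k [Hk1 Hk2]].
    exists (fst (u k)), (snd (u k)). destruct (Hu k) as [H1 [H2 _]]. split; [|split]; auto.
    eapply Rlt_trans; eauto. }
  destruct (HW p HWp) as [r [Hr Hr2]]. destruct (Hp r Hr 0%nat) as [k [_ Hk2]].
  destruct (Hu k) as [_ [_ H3]]. apply H3. apply Hr2. auto. Qed.


Lemma abs_prod_le : forall a b c d, Rabs a <= c -> Rabs b <= d -> Rabs (a * b) <= c * d.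
Proof. intros. rewrite Rabs_mult. apply Rmult_le_compat; auto; apply Rabs_pos. Qed.

Section Main.
Variable n : nat.
Hypothesis Hn : (1 <= n)%nat.
Variables A B : set n.
Hypothesis HA : in_Jn A.
Hypothesis HB : in_Jn B.
Hypothesis HAne : nonempty A.
Hypothesis HBne : nonempty B.
Variable M : R.
Hypothesis HMA : forall p, A p -> vnorm p <= M.
Hypothesis HMB : forall p, B p -> vnorm p <= M.
Variable xs : R.

Let f x p := f_ABx A B x p.
Let M0 := M_nonneg n A HAne M HMA.

Lemma set_bound : forall x p, 0 <= f x p -> vnorm p <= M + 2 * M * Rabs x.
Proof. intros x p Hf. assert (0 <= 2 * M * Rabs x) by (pose proof (Rabs_pos x); pose proof M0; nra).
  destruct (Rle_dec (vnorm p) M) as [|Hgt]. lra. apply Rnot_le_lt in Hgt.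
  pose proof (dS_far n Hn A HAne M HMA p Hgt) as [H1 H2].
  pose proof (dS_far n Hn B HBne M HMB p Hgt) as [H3 H4].
  unfold f, f_ABx in Hf.
  assert (Hd : Rabs (dS p A - dS p B) <= 2 * M) by (apply Rabs_le; lra).
  assert (Hx : Rabs (x * (dS p A - dS p B)) <= Rabs x * (2 * M)) by (apply abs_prod_le; lra).
  assert (x * (dS p A - dS p B) <= Rabs x * (2 * M)) by (eapply Rle_trans; [apply Rle_abs | exact Hx]).
  replace (x * dS p A + (1 - x) * dS p B) with (dS p B + x * (dS p A - dS p B)) in Hf by ring. lra. Qed.

Lemma f_cont : forall p eps, 0 < eps -> exists eta, 0 < eta /\ forall x q, Rabs (x - xs) < eta -> vdist p q < eta -> Rabs (f x q - f xs p) < eps.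
Proof. intros p eps He.
  set (K := 2 * (vnorm p + 1 + M) + 1). assert (HK : 0 < K) by (unfold K; pose proof (vnorm_ge0 n p); pose proof M0; lra).
  set (c := Rabs xs + Rabs (1 - xs) + 1). assert (Hc : 0 < c) by (unfold c; pose proof (Rabs_pos xs); pose proof (Rabs_pos (1 - xs)); lra).
  assert (He2 : 0 < eps / (2 * c)) by (apply Rdiv_lt_0_compat; lra).
  destruct (dS_cont n Hn A HA HAne M HMA p _ He2) as [rA [HrA HA2]].
  destruct (dS_cont n Hn B HB HBne M HMB p _ He2) as [rB [HrB HB2]].
  assert (He3 : 0 < eps / (2 * K)) by (apply Rdiv_lt_0_compat; lra).
  exists (Rmin 1 (Rmin rA (Rmin rB (eps / (2 * K))))). split. repeat apply Rmin_glb_lt; lra.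
  intros x q Hx Hq.
  pose proof (Rmin_l 1 (Rmin rA (Rmin rB (eps / (2 * K))))). pose proof (Rmin_r 1 (Rmin rA (Rmin rB (eps / (2 * K))))).
  pose proof (Rmin_l rA (Rmin rB (eps / (2 * K)))). pose proof (Rmin_r rA (Rmin rB (eps / (2 * K)))).
  pose proof (Rmin_l rB (eps / (2 * K))). pose proof (Rmin_r rB (eps / (2 * K))).
  set (et := Rmin 1 (Rmin rA (Rmin rB (eps / (2 * K))))) in *.
  set (et2 := Rmin rA (Rmin rB (eps / (2 * K)))) in *. set (et3 := Rmin rB (eps / (2 * K))) in *.
  specialize (HA2 q ltac:(lra)). specialize (HB2 q ltac:(lra)).
  assert (Hnq : vnorm q <= vnorm p + 1). { pose proof (vnorm_le_dist n q p). rewrite vdist_sym in H5. lra. }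
  pose proof (dS_abs n Hn A HAne M HMA q). pose proof (dS_abs n Hn B HBne M HMB q).
  unfold f, f_ABx.
  replace (x * dS q A + (1 - x) * dS q B - (xs * dS p A + (1 - xs) * dS p B))
    with ((x - xs) * (dS q A - dS q B) + (xs * (dS q A - dS p A) + (1 - xs) * (dS q B - dS p B))) by ring.
  eapply Rle_lt_trans. apply Rabs_triang.
  assert (T1 : Rabs ((x - xs) * (dS q A - dS q B)) <= (eps / (2 * K)) * K).
  { apply abs_prod_le. lra. pose proof (Rabs_triang (dS q A) (- dS q B)). rewrite Rabs_Ropp in H7.
    unfold Rminus. unfold K. lra. }
  assert (T2 : Rabs (xs * (dS q A - dS p A) + (1 - xs) * (dS q B - dS p B)) <= (Rabs xs + Rabs (1 - xs)) * (eps / (2 * c))).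
  { eapply Rle_trans. apply Rabs_triang. 
    pose proof (abs_prod_le xs (dS q A - dS p A) (Rabs xs) (eps / (2 * c)) (Rle_refl _) ltac:(lra)).
    pose proof (abs_prod_le (1 - xs) (dS q B - dS p B) (Rabs (1 - xs)) (eps / (2 * c)) (Rle_refl _) ltac:(lra)). lra. }
  replace (eps / (2 * K) * K) with (eps / 2) in T1 by (field; lra).
  assert ((Rabs xs + Rabs (1 - xs)) * (eps / (2 * c)) < eps / 2).
  { apply (Rmult_lt_reg_r (2 * c)). lra. replace ((Rabs xs + Rabs (1 - xs)) * (eps / (2 * c)) * (2 * c)) with ((Rabs xs + Rabs (1 - xs)) * eps) by (field; lra).
    unfold c. lra. }
  lra. Qed.

Let R1 := M + 2 * M * (Rabs xs + 1).

Lemma near_bound : forall x p, Rabs (x - xs) < 1 -> 0 <= f x p -> vnorm p <= R1.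
Proof. intros x p Hx Hf. pose proof (set_bound x p Hf). unfold R1.
  assert (Rabs x <= Rabs xs + 1). { pose proof (Rabs_triang (x - xs) xs). replace (x - xs + xs) with x in H0 by ring. lra. }
  pose proof M0. nra. Qed.

Lemma avg_cover : forall x, exists s, cover_sum (dist_avg A B x) s.
Proof. intros x. apply (cover_bounded n _ (M + 2 * M * Rabs x) Hn). intros p Hp. apply set_bound. exact Hp. Qed.

Lemma claim1 : forall eps, 0 < eps -> exists delta, 0 < delta /\ forall x, Rabs (x - xs) < delta ->
  mu (dist_avg A B x) <= mu (dist_avg A B xs) + eps.
Proof. intros eps He.
  destruct (mu_approx n _ (avg_cover xs) (eps/3) ltac:(lra)) as [s [[a [b [Hcov Hs]]] Hslt]].
  destruct (enlarge n a b s (eps/3) Hs ltac:(lra)) as [a' [b' [L [Hab [HL HLle]]]]].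
  set (W := fun p : vec n => exists k, forall i, a' k i < p i < b' k i).
  destruct (eventually n W (fun x p => 0 <= f x p) R1 xs) as [delta [Hd Hev]].
  - intros p Hp. apply boxes_open. exact Hp.
  - apply near_bound.
  - intros p Hap.
    assert (Hp : dist_avg A B xs p).
    { unfold dist_avg. destruct (Rle_dec 0 (f_ABx A B xs p)) as [|Hn1]; auto. exfalso. apply Rnot_le_lt in Hn1.
      destruct (f_cont p (- f_ABx A B xs p) ltac:(lra)) as [eta [Heta Hc]].
      destruct (Hap eta Heta) as [x [q [Hx [Hq HQ]]]]. specialize (Hc x q Hx Hq). unfold f in *.
      apply Rabs_def2 in Hc. lra. }
    destruct (Hcov p Hp) as [k Hk]. exists k. intros i. specialize (Hk i). specialize (Hab k i). lra.
  - exists delta. split; auto. intros x Hx.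
    assert (cover_sum (dist_avg A B x) L).
    { exists a', b'. split; auto. intros p Hp. destruct (Hev x p Hx Hp) as [k Hk]. exists k. intros i. specialize (Hk i). lra. }
    pose proof (mu_le_cover n _ L H). lra. Qed.

Hypothesis HOm : mu (Omega A B xs) = 0.

Lemma claim2 : forall eps, 0 < eps -> exists delta, 0 < delta /\ forall x, Rabs (x - xs) < delta ->
  mu (dist_avg A B xs) <= mu (dist_avg A B x) + eps.
Proof. intros eps He.
  assert (HOc : exists s, cover_sum (Omega A B xs) s).
  { apply (cover_bounded n _ (M + 2 * M * Rabs xs) Hn). intros p Hp. apply set_bound. unfold Omega in Hp. unfold f. lra. }
  destruct (mu_approx n _ HOc (eps/4) ltac:(lra)) as [s [[a [b [Hcov Hs]]] Hslt]]. rewrite HOm in Hslt.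
  destruct (enlarge n a b s (eps/4) Hs ltac:(lra)) as [a' [b' [L [Hab [HL HLle]]]]].
  set (W := fun p : vec n => exists k, forall i, a' k i < p i < b' k i).
  destruct (eventually n W (fun x p => 0 <= f xs p /\ f x p < 0) R1 xs) as [delta [Hd Hev]].
  - intros p Hp. apply boxes_open. exact Hp.
  - intros x p Hx [Hp _]. apply (near_bound xs). rewrite Rminus_diag, Rabs_R0; lra. auto.
  - intros p Hap.
    assert (Hp : Omega A B xs p).
    { unfold Omega. destruct (Rtotal_order (f_ABx A B xs p) 0) as [Hlt|[Heq|Hgt]]; auto; exfalso.
      - destruct (f_cont p (- f_ABx A B xs p) ltac:(lra)) as [eta [Heta Hc]].
        destruct (Hap eta Heta) as [x [q [Hx [Hq [HQ1 _]]]]].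
        assert (Rabs (xs - xs) < eta) by (rewrite Rminus_diag, Rabs_R0; lra).
        specialize (Hc xs q H Hq). unfold f in *. apply Rabs_def2 in Hc. lra.
      - destruct (f_cont p (f_ABx A B xs p) ltac:(lra)) as [eta [Heta Hc]].
        destruct (Hap eta Heta) as [x [q [Hx [Hq [_ HQ2]]]]].
        specialize (Hc x q Hx Hq). unfold f in *. apply Rabs_def2 in Hc. lra. }
    destruct (Hcov p Hp) as [k Hk]. exists k. intros i. specialize (Hk i). specialize (Hab k i). lra.
  - exists (Rmin delta 1). split. apply Rmin_glb_lt; lra. intros x Hx.
    assert (Hx1 : Rabs (x - xs) < delta) by (eapply Rlt_le_trans; [exact Hx | apply Rmin_l]).
    destruct (mu_approx n _ (avg_cover x) (eps/4) ltac:(lra)) as [t [[a1 [b1 [Hcov1 Ht]]] Htlt]].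
    destruct (cover_union n (dist_avg A B xs) a1 b1 a' b' t L) as [L3 [HL3 HL3le]]; auto.
    { intros p Hp. destruct (Rle_dec 0 (f_ABx A B x p)) as [Hq|Hq].
      - left. apply Hcov1. exact Hq.
      - right. apply Rnot_le_lt in Hq. destruct (Hev x p Hx1 (conj Hp Hq)) as [k Hk]. exists k. intros i. specialize (Hk i). lra. }
    pose proof (mu_le_cover n _ L3 HL3). lra. Qed.
End Main.


Theorem mainTheorem4 (n : nat) (Hn : (1 <= n)%nat) (A B : set n)
  (HA : in_Jn A) (HB : in_Jn B) (HAne : nonempty A) (HBne : nonempty B)
  (HBA : forall p, B p -> A p) (xs : R)
  (HOm : mu (Omega A B xs) = 0) :
  continuity_pt (fun x => mu (dist_avg A B x)) xs.
Proof.
  pose proof HA as [[MA HMA] _]. pose proof HB as [[MB HMB] _].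
  set (M := Rmax MA MB).
  assert (HMA' : forall p, A p -> vnorm p <= M). { intros p Hp. eapply Rle_trans. apply HMA; auto. apply Rmax_l. }
  assert (HMB' : forall p, B p -> vnorm p <= M). { intros p Hp. eapply Rle_trans. apply HMB; auto. apply Rmax_r. }
  unfold continuity_pt, continue_in, limit1_in, limit_in. intros eps Heps.
  destruct (claim1 n Hn A B HA HB HAne HBne M HMA' HMB' xs (eps/2) ltac:(lra)) as [d1 [Hd1 H1]].
  destruct (claim2 n Hn A B HA HB HAne HBne M HMA' HMB' xs HOm (eps/2) ltac:(lra)) as [d2 [Hd2 H2]].
  exists (Rmin d1 d2). split. apply Rmin_glb_lt; auto.
  intros x [_ Hx]. simpl in *. unfold Rdist in *.
  assert (Hx1 : Rabs (x - xs) < d1) by (eapply Rlt_le_trans; [exact Hx | apply Rmin_l]).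
  assert (Hx2 : Rabs (x - xs) < d2) by (eapply Rlt_le_trans; [exact Hx | apply Rmin_r]).
  specialize (H1 x Hx1). specialize (H2 x Hx2). apply Rabs_def1; lra.
Qed.
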